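(* Let $\Omega_3$ be a set with $3$ elements and $v_0:2^{\Omega_3}\to[0,\infty)$ non-decreasing with $v_0(\emptyset)=0$. Define $v_{n+1}(A)=\sup_{\mathcal I\in\Sigma}\mu_{v_n,\mathcal I}(A)$, $A\subset\Omega_3$, $n\ge0$. Then $v_1=v_2=\cdots$ and $v_1$ is submodular.
   Context: $\Sigma$ denotes the set of all chains $\mathcal I\subset2^{\Omega_3}$ (totally ordered by inclusion) containing $\emptyset$ and $\Omega_3$ and generating $2^{\Omega_3}$ as a $\sigma$-algebra (equivalently, maximal chains of subsets). For non-decreasing $v$ and $\mathcal I\in\Sigma$, $\mu_{v,\mathcal I}$ is the unique measure on $2^{\Omega_3}$ with $\mu_{v,\mathcal I}(I)=v(I)$ for $I\in\mathcal I$. Non-decreasing means $v(A)\le v(B)$ for $A\subset B$; submodular means $v(A)+v(B)\ge v(A\cup B)+v(A\cap B)$. *)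

(* Defs.v *)
From mathcomp Require Import all_boot all_order all_algebra.
From mathcomp Require Import reals.
Set Implicit Arguments. Unset Strict Implicit. Unset Printing Implicit Defensive.
Import Order.TTheory GRing.Theory Num.Theory.
Local Open Scope ring_scope.

Section Defs.
Variables (R : realType) (T : finType).

Definition is_chain (C : {set {set T}}) : Prop :=
  forall A B : {set T}, A \in C -> B \in C -> (A \subset B) || (B \subset A).

(* sigma-algebra of subsets of the finite set T (countable unions = finite unions) *)
Definition is_sigma_algebra (F : {set {set T}}) : Prop :=
  [/\ set0 \in F, (forall A, A \in F -> ~: A \in F)
    & (forall A B : {set T}, A \in F -> B \in F -> A :|: B \in F)].

Definition generates_powerset (C : {set {set T}}) : Prop :=
  forall F, is_sigma_algebra F -> C \subset F -> F = setT.

Definition in_Sigma (C : {set {set T}}) : Prop :=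
  [/\ is_chain C, set0 \in C, setT \in C & generates_powerset C].

Definition is_measure (mu : {set T} -> R) : Prop :=
  [/\ mu set0 = 0, (forall A, 0 <= mu A)
    & (forall A B : {set T}, [disjoint A & B] -> mu (A :|: B) = mu A + mu B)].

Definition is_mu_of (v : {set T} -> R) (C : {set {set T}}) (mu : {set T} -> R) : Prop :=
  is_measure mu /\ (forall I, I \in C -> mu I = v I).

Definition nondecreasing_setfun (v : {set T} -> R) : Prop :=
  forall A B : {set T}, A \subset B -> v A <= v B.

Definition submodular (v : {set T} -> R) : Prop :=
  forall A B : {set T}, v (A :|: B) + v (A :&: B) <= v A + v B.

Definition next_v (v : {set T} -> R) : {set T} -> R :=
  fun A => sup (fun x : R => exists C mu, [/\ in_Sigma C, is_mu_of v C mu & x = mu A]).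

End Defs.

(* Main.v *)
Require Import Defs.
From mathcomp Require Import all_boot all_order all_algebra.
From mathcomp Require Import boolp reals ring lra.
Import Order.TTheory GRing.Theory Num.Theory.
Local Open Scope ring_scope.
Set Implicit Arguments. Unset Strict Implicit.

Lemma sup_ubx (R : realType) (E : R -> Prop) x M :
  (forall y, E y -> y <= M) -> E x -> x <= sup E.
Proof.
move=> hM Ex; apply: (ub_le_sup); last exact: Ex.
by exists M => y Ey; apply: hM.
Qed.

Lemma sup_lubx (R : realType) (E : R -> Prop) x M :
  (forall y, E y -> y <= M) -> E x -> sup E <= M.
Proof. by move=> hM Ex; apply: ge_sup; [exists x|move=> y Ey; apply: hM]. Qed.

Lemma sup_eqx (R : realType) (E : R -> Prop) x :
  (forall y, E y -> y <= x) -> E x -> sup E = x.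
Proof.
by move=> hM Ex; apply/eqP; rewrite eq_le (sup_lubx hM Ex) (sup_ubx hM Ex).
Qed.

Section S.
Variables (R : realType) (T : finType).
Hypothesis hT : #|T| = 3%N.

Lemma three_elems : exists x y z : T, [/\ x != y, x != z & y != z].
Proof.
have := enum_uniq T; move: hT; rewrite cardT.
case: (enum T) => [|x [|y [|z [|]]]] //= _.
rewrite !inE !negb_or andbT => /andP [/andP[xy xz] yz].
by exists x, y, z.
Qed.

Lemma cover3 (a b c : T) : a != b -> a != c -> b != c ->
  forall t, [|| t == a, t == b | t == c].
Proof.
move=> ab ac bc t; apply/negP => /negP; rewrite !negb_or => /and3P [ta tb tc].
have : #|(t |: (a |: (b |: [set c])))| = 4%N.
  rewrite !cardsU1 cards1 !inE !negb_or ta tb tc ab ac bc /=.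
  done.
move=> h; have := max_card (t |: (a |: (b |: [set c]))); by rewrite h hT.
Qed.

Definition chain3 (a b : T) : {set {set T}} :=
  set0 |: ([set a] |: ([set a; b] |: [set setT])).

Section Dist.
Variables a b c : T.
Hypotheses (ab : a != b) (ac : a != c) (bc : b != c).
Let cov := cover3 ab ac bc.
Let ba : (b == a) = false. Proof. by rewrite eq_sym (negbTE ab). Qed.
Let ca : (c == a) = false. Proof. by rewrite eq_sym (negbTE ac). Qed.
Let cb : (c == b) = false. Proof. by rewrite eq_sym (negbTE bc). Qed.
Let ab' : (a == b) = false. Proof. exact: negbTE. Qed.
Let ac' : (a == c) = false. Proof. exact: negbTE. Qed.
Let bc' : (b == c) = false. Proof. exact: negbTE. Qed.

Lemma chain3_sigma : in_Sigma (chain3 a b).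
Proof.
split.
- move=> A B; rewrite !inE => /or4P [] /eqP -> /or4P [] /eqP ->;
  rewrite ?sub0set ?subsetT ?orbT ?subxx //.
  + by rewrite sub1set !inE eqxx.
  + apply/orP; right; apply/subsetP => t; rewrite !inE.
    have := cov t; case/or3P => /eqP ->; rewrite ?eqxx ?ab' ?ac' ?ba ?bc' ?ca ?cb //.
- by rewrite !inE eqxx.
- by rewrite !inE eqxx !orbT.
move=> F [F0 FC FU] sub; apply/setP => B; rewrite inE.
have Fa : [set a] \in F by apply: (subsetP sub); rewrite !inE eqxx orbT.
have Fab : [set a; b] \in F by apply: (subsetP sub); rewrite !inE eqxx !orbT.
have Fc : [set c] \in F.
  have -> : [set c] = ~: [set a; b].
    apply/setP => t; rewrite !inE.
    by have := cov t; case/or3P => /eqP ->; rewrite ?eqxx ?ab' ?ac' ?ba ?bc' ?ca ?cb.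
  exact: FC.
have Fb : [set b] \in F.
  have -> : [set b] = ~: ([set a] :|: [set c]).
    apply/setP => t; rewrite !inE.
    by have := cov t; case/or3P => /eqP ->; rewrite ?eqxx ?ab' ?ac' ?ba ?bc' ?ca ?cb.
  by apply: FC; apply: FU.
have EB : B = ((if a \in B then [set a] else set0) :|: (if b \in B then [set b] else set0))
   :|: (if c \in B then [set c] else set0).
  apply/setP => t; rewrite !inE.
  have := cov t; case/or3P => /eqP ->;
  by case: (a \in B); case: (b \in B); case: (c \in B); rewrite !inE ?eqxx ?ab' ?ac' ?ba ?bc' ?ca ?cb.
rewrite EB; apply: FU (FU _ _ _ _) _; by case: ifP.
Qed.

Variable v : {set T} -> R.
Hypotheses (vmono : nondecreasing_setfun v) (v0 : v set0 = 0).

Definition gmu (B : {set T}) : R :=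
  (a \in B)%:R * v [set a] + (b \in B)%:R * (v [set a; b] - v [set a])
  + (c \in B)%:R * (v setT - v [set a; b]).

Lemma gmu_ok : is_mu_of v (chain3 a b) gmu.
Proof.
split; first split.
- by rewrite /gmu !inE !mul0r !addr0.
- move=> B; rewrite /gmu.
  have h1 : 0 <= v [set a] by rewrite -v0; apply: vmono; exact: sub0set.
  have h2 : 0 <= v [set a; b] - v [set a].
    by rewrite subr_ge0; apply: vmono; rewrite sub1set !inE eqxx.
  have h3 : 0 <= v setT - v [set a; b] by rewrite subr_ge0; apply: vmono; exact: subsetT.
  by rewrite !addr_ge0 // mulr_ge0 // ler0n.
- move=> A B dAB.
  have hx : forall x, (x \in A :|: B)%:R = (x \in A)%:R + (x \in B)%:R :> R.
    move=> x; rewrite inE; case HA: (x \in A); last by rewrite add0r.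
    by rewrite (disjointFr dAB HA) addr0.
  rewrite /gmu !hx; ring.
move=> I; rewrite !inE => /or4P [] /eqP ->; rewrite /gmu !inE ?eqxx ?ab' ?ac' ?ba ?bc' ?ca ?cb /=;
  rewrite ?v0; ring.
Qed.
End Dist.

Lemma sep (C : {set {set T}}) x y : in_Sigma C -> x != y ->
  exists2 D, D \in C & (x \in D) != (y \in D).
Proof.
move=> [_ _ _ gen] xy.
case/boolP: [exists D in C, (x \in D) != (y \in D)].
  by case/existsP => D /andP [DC sD]; exists D.
rewrite negb_exists => /forallP nD.
pose F := [set B : {set T} | (x \in B) == (y \in B)].
have sF : is_sigma_algebra F.
  split; first by rewrite !inE.
  + by move=> A; rewrite !inE; case: (x \in A); case: (y \in A).
  + by move=> A B; rewrite !inE; case: (x \in A); case: (y \in A); case: (x \in B); case: (y \in B).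
have sub : C \subset F.
  apply/subsetP => D DC; rewrite inE; have := nD D; rewrite DC /=.
  by case: (x \in D); case: (y \in D).
have := gen F sF sub => EF.
have : [set x] \in F by rewrite EF inE.
by rewrite !inE eqxx (eq_sym y) (negbTE xy).
Qed.

Definition nontriv (P : {set T}) := (exists t, t \in P) /\ (exists t, t \notin P).

Lemma sep_nt (P : {set T}) x y : (x \in P) != (y \in P) -> nontriv P.
Proof.
case Hx: (x \in P) => /= Hy.
  by split; [exists x|exists y; move: Hy; case: (y \in P)].
by split; [exists y; move: Hy; case: (y \in P)|exists x; rewrite Hx].
Qed.

Definition chain_concl (C : {set {set T}}) :=
  exists a b c : T, [/\ a != b, a != c, b != c, [set a] \in C & [set a; b] \in C].

Lemma aux2 (C : {set {set T}}) P Q : P \in C -> Q \in C -> P \subset Q -> P != Q ->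
  nontriv P -> nontriv Q -> chain_concl C.
Proof.
move=> PC QC PQ nPQ [[a aP] _] [_ [c cQ]].
have : P \proper Q by rewrite properEneq nPQ PQ.
case/properP => _ [b bQ bP].
have aQ : a \in Q by apply: (subsetP PQ).
have cP : c \notin P by apply: contra cQ; apply: (subsetP PQ).
have ab : a != b by apply: contraNneq bP => <-.
have ac : a != c by apply: contraNneq cQ => <-.
have bc : b != c by apply: contraNneq cQ => <-.
have cov := cover3 ab ac bc.
exists a, b, c; split => //.
  have -> : [set a] = P; last done.
  apply/setP => t; rewrite inE.
  have := cov t; case/or3P => /eqP ->; rewrite ?eqxx ?aP.
  - done.
  - by rewrite (negbTE bP) eq_sym (negbTE ab).
  - by rewrite (negbTE cP) eq_sym (negbTE ac).
have -> : [set a; b] = Q; last done.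
apply/setP => t; rewrite !inE.
have := cov t; case/or3P => /eqP ->; rewrite ?eqxx ?aQ ?bQ ?orbT //.
by rewrite (negbTE cQ) eq_sym (negbTE ac) eq_sym (negbTE bc).
Qed.

Lemma chain_struct (C : {set {set T}}) : in_Sigma C -> chain_concl C.
Proof.
move=> CS; have [x [y [z [xy xz yz]]]] := three_elems.
have [D1 C1 s1] := sep CS xy.
have [D2 C2 s2] := sep CS yz.
have [D3 C3 s3] := sep CS xz.
have aux : forall P Q, P \in C -> Q \in C -> P != Q -> nontriv P -> nontriv Q -> chain_concl C.
  move=> P Q PC QC nPQ nP nQ.
  case: CS => ch _ _ _.
  case/orP: (ch P Q PC QC) => sPQ.
    exact: (aux2 PC QC sPQ nPQ nP nQ).
  by apply: (aux2 QC PC sPQ _ nQ nP); rewrite eq_sym.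
case: (eqVneq D1 D2) => [E12|n12]; last exact: (aux _ _ C1 C2 n12 (sep_nt s1) (sep_nt s2)).
have n13 : D1 != D3.
  apply/eqP => E13; move: s2 s3; rewrite -E12 -E13.
  by move: s1; case: (x \in D1); case: (y \in D1); case: (z \in D1).
exact: (aux _ _ C1 C3 n13 (sep_nt s1) (sep_nt s3)).
Qed.

Section Meas.
Variable mu : {set T} -> R.
Hypothesis hmu : is_measure mu.

Lemma disjP (X Y : {set T}) : (forall t, t \in X -> t \in Y -> False) -> [disjoint X & Y].
Proof.
move=> h; rewrite -setI_eq0; apply/eqP/setP => t; rewrite !inE.
by case HX: (t \in X); case HY: (t \in Y) => //; case: (h t).
Qed.

Lemma mu_ie (X Y : {set T}) : mu (X :|: Y) + mu (X :&: Y) = mu X + mu Y.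
Proof.
case: hmu => _ _ add.
have E1 : X :|: Y = X :|: (Y :\: X).
  by apply/setP => t; rewrite !inE; case: (t \in X); case: (t \in Y).
have E2 : Y = (X :&: Y) :|: (Y :\: X).
  by apply/setP => t; rewrite !inE; case: (t \in X); case: (t \in Y).
have D1 : [disjoint X & Y :\: X] by apply: disjP => t; rewrite !inE => ->.
have D2 : [disjoint X :&: Y & Y :\: X] by apply: disjP => t; rewrite !inE => /andP [->].
rewrite E1 add // {3}E2 add //.
lra.
Qed.

Lemma mu_mono (X Y : {set T}) : X \subset Y -> mu X <= mu Y.
Proof.
move=> XY; have := mu_ie X (Y :\: X); case: hmu => m0 pos _.
have -> : X :|: Y :\: X = Y.
  apply/setP => t; rewrite !inE; case HX: (t \in X) => //=.
  by rewrite (subsetP XY).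
have -> : X :&: (Y :\: X) = set0.
  by apply/setP => t; rewrite !inE; case: (t \in X); rewrite ?andbF.
rewrite m0 => h; have := pos (Y :\: X); lra.
Qed.
End Meas.

Lemma step (v mu : {set T} -> R) (B P Q : {set T}) :
  submodular v -> is_measure mu -> P \subset Q -> mu P = v P -> mu Q = v Q ->
  mu (B :&: P) <= v (B :&: P) ->
  (B :&: Q = B :&: P \/ Q \subset B :|: P) -> mu (B :&: Q) <= v (B :&: Q).
Proof.
move=> sv hmu PQ eP eQ hP [-> //|QBP].
have E1 : B :&: Q :|: P = Q.
  apply/setP => t; rewrite !inE; case HP: (t \in P).
    by rewrite orbT (subsetP PQ).
  rewrite orbF; case HQ: (t \in Q); rewrite ?andbF ?andbT //.
  by have := subsetP QBP t HQ; rewrite !inE HP orbF.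
have E2 : B :&: Q :&: P = B :&: P.
  apply/setP => t; rewrite !inE; case HP: (t \in P); rewrite ?andbF ?andbT //.
  by rewrite (subsetP PQ t HP) andbT.
have := mu_ie hmu (B :&: Q) P; have := sv (B :&: Q) P.
rewrite E1 E2; lra.
Qed.

Lemma upper (v mu : {set T} -> R) (C : {set {set T}}) A :
  submodular v -> v set0 = 0 -> in_Sigma C -> is_mu_of v C mu -> mu A <= v A.
Proof.
move=> sv v0 CS [hmu agr].
have [a [b [c [ab ac bc Ca Cab]]]] := chain_struct CS.
case: CS => _ C0 CT _.
have cov := cover3 ab ac bc.
have ba : (b == a) = false by rewrite eq_sym (negbTE ab).
have ca : (c == a) = false by rewrite eq_sym (negbTE ac).
have cb : (c == b) = false by rewrite eq_sym (negbTE bc).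
have s0 : mu (A :&: set0) <= v (A :&: set0).
  by rewrite setI0 v0; case: hmu => -> _ _.
have s1 : mu (A :&: [set a]) <= v (A :&: [set a]).
  apply: (step sv hmu (sub0set _) (agr _ C0) (agr _ Ca) s0).
  case: (boolP (a \in A)) => ha; [right|left].
    by apply/subsetP => t; rewrite !inE => /eqP ->; rewrite ha.
  apply/setP => t; rewrite !inE; case: eqP => [->|]; by rewrite ?(negbTE ha) ?andbF.
have s2 : mu (A :&: [set a; b]) <= v (A :&: [set a; b]).
  apply: (step sv hmu _ (agr _ Ca) (agr _ Cab) s1).
    by rewrite sub1set !inE eqxx.
  case: (boolP (b \in A)) => hb; [right|left].
    by apply/subsetP => t; rewrite !inE => /orP [] /eqP ->; rewrite ?hb ?eqxx ?orbT.
  apply/setP => t; rewrite !inE; case: (eqVneq t b) => [->|]; rewrite ?(negbTE hb) ?orbF //.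
have s3 : mu (A :&: setT) <= v (A :&: setT).
  apply: (step sv hmu (subsetT _) (agr _ Cab) (agr _ CT) s2).
  case: (boolP (c \in A)) => hc; [right|left].
    apply/subsetP => t _; rewrite !inE.
    by case/or3P: (cov t) => /eqP ->; rewrite ?hc ?eqxx ?orbT.
  apply/setP => t; rewrite !inE.
  by case/or3P: (cov t) => /eqP ->; rewrite ?(negbTE hc) ?eqxx ?ca ?cb ?ba ?andbT ?orbT.
by move: s3; rewrite setIT.
Qed.

Lemma memchain (a b c : T) (A : {set T}) : a != b -> a != c -> b != c ->
  (b \in A) ==> (a \in A) -> (c \in A) ==> (b \in A) -> A \in chain3 a b.
Proof.
move=> ab ac bc.
have cov := cover3 ab ac bc.
have ba : (b == a) = false by rewrite eq_sym (negbTE ab).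
have ca : (c == a) = false by rewrite eq_sym (negbTE ac).
have cb : (c == b) = false by rewrite eq_sym (negbTE bc).
have ab' : (a == b) = false by exact: negbTE.
have ac' : (a == c) = false by exact: negbTE.
have bc' : (b == c) = false by exact: negbTE.
rewrite !inE; case Ha: (a \in A); case Hb: (b \in A); case Hc: (c \in A) => //= _ _.
- apply/or4P; apply: Or44; apply/eqP/setP => t; rewrite !inE.
  by case/or3P: (cov t) => /eqP ->.
- apply/or4P; apply: Or43; apply/eqP/setP => t; rewrite !inE.
  by case/or3P: (cov t) => /eqP ->; rewrite ?eqxx ?ab' ?ac' ?ba ?bc' ?ca ?cb ?orbT.
- apply/or4P; apply: Or42; apply/eqP/setP => t; rewrite !inE.
  by case/or3P: (cov t) => /eqP ->; rewrite ?eqxx ?ab' ?ac' ?ba ?bc' ?ca ?cb ?orbT.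
- apply/or4P; apply: Or41; apply/eqP/setP => t; rewrite !inE.
  by case/or3P: (cov t) => /eqP ->.
Qed.

Definition Sv (v : {set T} -> R) (A : {set T}) : R -> Prop :=
  fun x => exists C mu, [/\ in_Sigma C, is_mu_of v C mu & x = mu A].

Lemma self_in (v : {set T} -> R) (A : {set T}) : nondecreasing_setfun v -> v set0 = 0 ->
  Sv v A (v A).
Proof.
move=> vm v0.
have [x [y [z [xy xz yz]]]] := three_elems.
have yx : y != x by rewrite eq_sym.
have zx : z != x by rewrite eq_sym.
have zy : z != y by rewrite eq_sym.
have go : forall a b c, a != b -> a != c -> b != c ->
    (b \in A) ==> (a \in A) -> (c \in A) ==> (b \in A) -> Sv v A (v A).
  move=> a b c ab ac bc h1 h2.
  exists (chain3 a b), (gmu a b c v); split.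
  - exact: (chain3_sigma ab ac bc).
  - exact: (gmu_ok ab ac bc vm v0).
  - by rewrite ((gmu_ok ab ac bc vm v0).2 A (memchain ab ac bc h1 h2)).
case Hx: (x \in A); case Hy: (y \in A); case Hz: (z \in A).
- by apply: (go x y z); rewrite ?Hx ?Hy ?Hz.
- by apply: (go x y z); rewrite ?Hx ?Hy ?Hz.
- by apply: (go x z y); rewrite ?Hx ?Hy ?Hz.
- by apply: (go x y z); rewrite ?Hx ?Hy ?Hz.
- by apply: (go y z x); rewrite ?Hx ?Hy ?Hz.
- by apply: (go y x z); rewrite ?Hx ?Hy ?Hz.
- by apply: (go z x y); rewrite ?Hx ?Hy ?Hz.
- by apply: (go x y z); rewrite ?Hx ?Hy ?Hz.
Qed.

Lemma three_case (A B : {set T}) :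
  [\/ A \subset B, B \subset A, A :&: B = set0 | A :|: B = setT].
Proof.
case: (boolP (A \subset B)) => [h|/subsetPn [a aA aB]]; first by apply: Or41.
case: (boolP (B \subset A)) => [h|/subsetPn [b bB bA]]; first by apply: Or42.
case: (eqVneq (A :&: B) set0) => [h|/set0Pn [c]]; first by apply: Or43.
rewrite inE => /andP [cA cB].
apply: Or44; apply/setP => t; rewrite !inE.
have ab : a != b by apply: contraNneq bA => <-.
have ac : a != c by apply: contraNneq aB => ->.
have bc : b != c by apply: contraNneq bA => ->.
by case/or3P: (cover3 ab ac bc t) => /eqP ->; rewrite ?aA ?bB ?cA ?orbT.
Qed.

Lemma mu_le_top (v mu : {set T} -> R) (C : {set {set T}}) (A : {set T}) : in_Sigma C -> is_mu_of v C mu -> mu A <= v setT.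
Proof.
move=> [_ _ CT _] [hmu agr]; rewrite -(agr _ CT); apply: mu_mono => //; exact: subsetT.
Qed.
End S.

Unset Implicit Arguments.
Set Strict Implicit.
Theorem corollary22 (R : realType) (T : finType) (hT : #|T| = 3%N)
    (v0 : {set T} -> R)
    (v0_ge0 : forall A, 0 <= v0 A)
    (v0_mono : nondecreasing_setfun v0)
    (v0_set0 : v0 set0 = 0) :
  (forall (n : nat) (A : {set T}), iter n.+1 (@next_v R T) v0 A = next_v v0 A)
  /\ submodular (next_v v0).
Proof.
set v1 := next_v v0.
have U : forall A C mu, in_Sigma C -> is_mu_of v0 C mu -> mu A <= v1 A.
  move=> A C mu CS hm; apply: (@sup_ubx _ (Sv v0 A) _ (v0 setT)).
    by move=> y [C' [mu' [CS' hm' ->]]]; exact: (mu_le_top A CS' hm').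
  by exists C, mu.
have L : forall A M, (forall C mu, in_Sigma C -> is_mu_of v0 C mu -> mu A <= M) -> v1 A <= M.
  move=> A M h; apply: (@sup_lubx _ (Sv v0 A) (v0 A)).
    by move=> y [C' [mu' [CS' hm' ->]]]; exact: (h C' mu' CS' hm').
  exact: (self_in hT A v0_mono v0_set0).
have W : exists C mu, in_Sigma C /\ is_mu_of v0 C mu.
  by have [C [mu [CS hm _]]] := self_in hT set0 v0_mono v0_set0; exists C, mu.
have v1T : v1 setT = v0 setT.
  have [C [mu [CS hm]]] := W.
  apply/eqP; rewrite eq_le; apply/andP; split.
    by apply: L => C' mu' [_ _ CT _] [_ agr]; rewrite agr.
  by case: (CS) => _ _ CT _; case: (hm) => _ agr; rewrite -(agr _ CT); exact: (U setT C mu CS hm).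
have v10 : v1 set0 = 0.
  have [C [mu [CS hm]]] := W.
  apply/eqP; rewrite eq_le; apply/andP; split.
    by apply: L => C' mu' _ [[-> _ _] _].
  by case: (hm) => [[m0 _ _] _]; rewrite -m0; exact: (U set0 C mu CS hm).
have v1m : nondecreasing_setfun v1.
  move=> A B AB; apply: L => C mu CS hm; apply: le_trans (U B C mu CS hm).
  by case: hm => hmu _; exact: mu_mono.
have v1s : submodular v1.
  move=> A B; case: (three_case hT A B) => [AB|BA|I0|UT].
  - by rewrite (setUidPr AB) (setIidPl AB) addrC.
  - by rewrite (setUidPl BA) (setIidPr BA).
  - rewrite I0 v10 addr0; apply: L => C mu CS hm.
    have := mu_ie hm.1 A B; rewrite I0; case: (hm) => [[-> _ _] _].
    have := U A C mu CS hm; have := U B C mu CS hm; lra.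
  - rewrite UT v1T.
    suff : v1 (A :&: B) <= v1 A + v1 B - v0 setT by lra.
    apply: L => C mu CS hm.
    have := mu_ie hm.1 A B; rewrite UT.
    case: (CS) => _ _ CT _; case: (hm) => _ agr; rewrite (agr _ CT).
    have := U A C mu CS hm; have := U B C mu CS hm; lra.
have idem : forall A, next_v v1 A = v1 A.
  move=> A; rewrite /next_v; apply: (@sup_eqx _ (Sv v1 A)).
    by move=> y [C [mu [CS hm ->]]]; exact: (upper hT A v1s v10 CS hm).
  exact: (self_in hT A v1m v10).
split => //.
elim=> [|n IH] A; first by [].
rewrite iterS.
have -> : iter n.+1 (@next_v R T) v0 = v1 by apply: funext => B; exact: IH.
exact: idem.
Qed.
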